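(* Let $M=[a_{ij},b_{ij}]_{i=1,\dots,n;\,j=1,\dots,m}$ and $\widehat M=[\hat a_{ij},\hat b_{ij}]_{i=1,\dots,n;\,j=1,\dots,m}$ be 2-person normal form game matrices of dimensions $n\times m$, and put $c_{ij}=\hat a_{ij}-a_{ij}$, $d_{ij}=\hat b_{ij}-b_{ij}$. Then $\widehat M$ can be obtained from $M$ by an OI-transformation if and only if both (C1) $a_{ij}+b_{ij}=\hat a_{ij}+\hat b_{ij}$ (equivalently $d_{ij}=-c_{ij}$) for all $i\le n$, $j\le m$; and (C2) $c_{ij}+c_{(i+1)(j+1)}=c_{i(j+1)}+c_{(i+1)j}$ for all $i\le n-1$, $j\le m-1$.
   Context: A 2-person normal form game matrix of dimensions $n\times m$ is $M=[a_{ij},b_{ij}]_{i\le n,\,j\le m}$, where $(a_{ij},b_{ij})\in\mathbb{R}^2$ are the payoffs of the row player $A$ and column player $B$ when $A$ plays strategy $A_i$ and $B$ plays $B_j$. A preplay offer by $A$ to $B$ of amount $\delta\ge 0$ contingent on $B_j$ replaces $(a_{ij},b_{ij})$ by $(a_{ij}-\delta,b_{ij}+\delta)$ for every $i$ (other entries unchanged); a preplay offer by $B$ to $A$ of amount $\delta\ge0$ contingent on $A_i$ replaces $(a_{ij},b_{ij})$ by $(a_{ij}+\delta,b_{ij}-\delta)$ for every $j$. Each such map is a POI-transformation; an OI-transformation is a composition of finitely many POI-transformations (all amounts non-negative). $\widehat M$ ''can be obtained from $M$ by an OI-transformation'' means $\widehat M=\tau(M)$ for some OI-transformation $\tau$.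 *)

(* Defs.v *)
From HB Require Import structures.
From mathcomp Require Import all_boot all_order all_algebra.
Set Implicit Arguments. Unset Strict Implicit. Unset Printing Implicit Defensive.
Import Order.TTheory GRing.Theory Num.Theory.
Local Open Scope ring_scope.

(* A 2-person normal form game matrix of dimensions n x m:
   the pair (A, B) of payoff matrices of the row player A and column player B;
   entry (i,j) of the game is (A i j, B i j). Indices are 0-based. *)
Definition game (R : realFieldType) (n m : nat) : Type :=
  ('M[R]_(n, m) * 'M[R]_(n, m))%type.

(* A preplay offer: either by A to B contingent on column j, or by B to A
   contingent on row i, with an amount delta. *)
Inductive offer (R : realFieldType) (n m : nat) : Type :=
  | OfferA : 'I_m -> R -> offer R n m
  | OfferB : 'I_n -> R -> offer R n m.

Definition offer_amount (R : realFieldType) (n m : nat) (o : offer R n m) : R :=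
  match o with OfferA _ d => d | OfferB _ d => d end.

Definition poi (R : realFieldType) (n m : nat) (o : offer R n m)
    (M : game R n m) : game R n m :=
  match o with
  | OfferA j d =>
      (\matrix_(i < n, k < m) (if k == j then M.1 i k - d else M.1 i k),
       \matrix_(i < n, k < m) (if k == j then M.2 i k + d else M.2 i k))
  | OfferB i d =>
      (\matrix_(l < n, k < m) (if l == i then M.1 l k + d else M.1 l k),
       \matrix_(l < n, k < m) (if l == i then M.2 l k - d else M.2 l k))
  end.

(* An OI-transformation: a finite composition of POI-transformations with
   non-negative amounts, represented by the list of its offers
   (applied from the last element of the list to the first). *)
Definition oi_apply (R : realFieldType) (n m : nat) (s : seq (offer R n m))
    (M : game R n m) : game R n m :=
  foldr (@poi R n m) M s.

Definition oi_obtainable (R : realFieldType) (n m : nat)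
    (M Mhat : game R n m) : Prop :=
  exists s : seq (offer R n m),
    (forall k : nat, (k < size s)%N ->
       forall o0, 0 <= offer_amount (nth o0 s k)) /\ Mhat = oi_apply s M.

(* Main.v *)
Require Import Defs.
From HB Require Import structures.
From mathcomp Require Import all_boot all_order all_algebra.
From mathcomp Require Import lra zify.
Import Order.TTheory GRing.Theory Num.Theory.
Local Open Scope ring_scope.

Definition contrib1 {R : realFieldType} {n m : nat} (o : offer R n m)
  (i : 'I_n) (k : 'I_m) : R :=
  match o with
  | OfferA j d => if k == j then - d else 0
  | OfferB l d => if i == l then d else 0
  end.

Lemma oi_applyE {R : realFieldType} {n m : nat} (s : seq (offer R n m))
  (M : game R n m) :
  forall i k, (oi_apply s M).1 i k = M.1 i k + \sum_(o <- s) contrib1 o i k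
   /\ (oi_apply s M).2 i k = M.2 i k - \sum_(o <- s) contrib1 o i k.
Proof.
elim: s => [|o s IH] i k.
  by rewrite big_nil addr0 subr0.
rewrite big_cons /=; have [E1 E2] := IH i k.
case: o => [j d|l d]; rewrite /= !mxE E1 E2; case: eqP => _; lra.
Qed.

Lemma decomp (R : realFieldType) n m (c : 'I_n.+1 -> 'I_m.+1 -> R) :
 (forall (i i' : 'I_n.+1) (j j' : 'I_m.+1), val i' = (val i).+1 ->
    val j' = (val j).+1 -> c i j + c i' j' = c i j' + c i' j) ->
 forall i j, c i j = c i ord0 + c ord0 j - c ord0 ord0.
Proof.
move=> H.
have I0n : (inord 0 : 'I_n.+1) = ord0 by apply: val_inj; rewrite /= inordK.
have I0m : (inord 0 : 'I_m.+1) = ord0 by apply: val_inj; rewrite /= inordK.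
have F : forall a b, (a < n)%N -> (b <= m)%N ->
   c (inord a.+1) (inord b) - c (inord a) (inord b)
   = c (inord a.+1) ord0 - c (inord a) ord0.
  move=> a b Ha; elim: b => [|b IH] Hb; first by rewrite I0m.
  have := IH (ltnW Hb).
  have e1 : val (inord a.+1 : 'I_n.+1) = (val (inord a : 'I_n.+1)).+1.
    rewrite /= inordK; last by rewrite ltnS.
    by rewrite inordK // ltnS ltnW.
  have e2 : val (inord b.+1 : 'I_m.+1) = (val (inord b : 'I_m.+1)).+1.
    rewrite /= inordK; last by rewrite ltnS.
    by rewrite inordK // ltnS ltnW.
  have := H _ _ _ _ e1 e2.
  lra.
have G : forall a b, (a <= n)%N -> (b <= m)%N ->
   c (inord a) (inord b) - c (inord a) ord0 = c ord0 (inord b) - c ord0 ord0.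
  move=> a b; elim: a => [|a IH] Ha Hb; first by rewrite I0n.
  
  have := IH (ltnW Ha) Hb.  have := F a b Ha Hb.  lra.

move=> i j.
have Hi : (i <= n)%N by rewrite -ltnS.
have Hj : (j <= m)%N by rewrite -ltnS.
have := G i j Hi Hj; rewrite !inord_val; lra.
Qed.

Theorem theorem1 (R : realFieldType) (n m : nat) (M Mhat : game R n m) :
  oi_obtainable M Mhat <->
  ((forall (i : 'I_n) (j : 'I_m),
      M.1 i j + M.2 i j = Mhat.1 i j + Mhat.2 i j) /\
   (forall (i i' : 'I_n) (j j' : 'I_m),
      val i' = (val i).+1 -> val j' = (val j).+1 ->
      (Mhat.1 i j - M.1 i j) + (Mhat.1 i' j' - M.1 i' j')
      = (Mhat.1 i j' - M.1 i j') + (Mhat.1 i' j - M.1 i' j))).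
Proof.
split.
  case=> s [_ ->].
  have Ec : forall i j, (oi_apply s M).1 i j - M.1 i j
                        = \sum_(o <- s) contrib1 o i j.
    by move=> i j; have [E1 _] := oi_applyE s M i j; rewrite E1; lra.
  split.
    by move=> i j; have [E1 E2] := oi_applyE s M i j; rewrite E1 E2; lra.
  move=> i i' j j' _ _; rewrite !Ec -!big_split; apply: eq_bigr => o _.
  by case: o => [k d|l d] /=; rewrite addrC.
case=> H1 H2.
move: M Mhat H1 H2; case: n => [|n] M Mhat H1 H2.
  exists [::]; split=> [k|]; first by [].
  by clear H1 H2; case: M Mhat => [A B] [A' B']; rewrite /= [A]flatmx0 [B]flatmx0 [A']flatmx0 [B']flatmx0.
move: M Mhat H1 H2; case: m => [|m] M Mhat H1 H2.
  exists [::]; split=> [k|]; first by [].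
  by clear H1 H2; case: M Mhat => [A B] [A' B']; rewrite /= [A]thinmx0 [B]thinmx0 [A']thinmx0 [B']thinmx0.
set c := fun i j => Mhat.1 i j - M.1 i j.
have D := @decomp R n m c H2.
set t := \sum_i `|c i ord0| + \sum_j `|c ord0 j - c ord0 ord0|.
have T1 : forall i, `|c i ord0| <= t.
  move=> i; rewrite /t (bigD1 i) //=.
  have h1 : 0 <= \sum_(k | k != i) `|c k ord0| by apply: sumr_ge0.
  have h2 : 0 <= \sum_j `|c ord0 j - c ord0 ord0| by apply: sumr_ge0.
  lra.
have T2 : forall j, `|c ord0 j - c ord0 ord0| <= t.
  move=> j; rewrite /t [X in _ <= X]addrC (bigD1 j) //=.
  have h1 : 0 <= \sum_(k | k != j) `|c ord0 k - c ord0 ord0| by apply: sumr_ge0.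
  have h2 : 0 <= \sum_i `|c i ord0| by apply: sumr_ge0.
  lra.
set y := fun i => c i ord0 + t.
set x := fun j => c ord0 ord0 - c ord0 j + t.
exists ([seq @OfferB R n.+1 m.+1 (i : 'I_n.+1) (y i) | i : 'I_n.+1 <- enum 'I_n.+1] ++
        [seq @OfferA R n.+1 m.+1 (j : 'I_m.+1) (x j) | j : 'I_m.+1 <- enum 'I_m.+1]).
split.
  move=> k Hk o0; rewrite nth_cat size_map; case: ifP => Hk2.
    rewrite (nth_map ord0) //= /y.
    have := T1 (nth ord0 (enum 'I_n.+1) k); rewrite ler_norml; lra.
  rewrite (nth_map ord0) /= /x.
    have := T2 (nth ord0 (enum 'I_m.+1) (k - size (enum 'I_n.+1))).
    rewrite ler_norml; lra.
  move: Hk Hk2; rewrite size_cat !size_map => Hk /negbT Hk2; rewrite -leqNgt in Hk2; lia.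
have S : forall i j, \sum_(o <- [seq @OfferB R n.+1 m.+1 (i : 'I_n.+1) (y i) | i : 'I_n.+1 <- enum 'I_n.+1] ++
        [seq @OfferA R n.+1 m.+1 (j : 'I_m.+1) (x j) | j : 'I_m.+1 <- enum 'I_m.+1]) contrib1 o i j = c i j.
  move=> i j; rewrite big_cat !big_map /=.
  rewrite (bigD1 i) //= eqxx big1 => [|l /negbTE Hl]; last by rewrite eq_sym Hl.
  rewrite (bigD1 j) //= eqxx big1 => [|l /negbTE Hl]; last by rewrite eq_sym Hl.
  rewrite D /y /x; lra.
apply: injective_projections; apply/matrixP => i j.
  have [E1 _] := oi_applyE ([seq @OfferB R n.+1 m.+1 (i : 'I_n.+1) (y i) | i : 'I_n.+1 <- enum 'I_n.+1] ++
        [seq @OfferA R n.+1 m.+1 (j : 'I_m.+1) (x j) | j : 'I_m.+1 <- enum 'I_m.+1]) M i j.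
  rewrite E1 S /c /=; lra.
have [_ E2] := oi_applyE ([seq @OfferB R n.+1 m.+1 (i : 'I_n.+1) (y i) | i : 'I_n.+1 <- enum 'I_n.+1] ++
        [seq @OfferA R n.+1 m.+1 (j : 'I_m.+1) (x j) | j : 'I_m.+1 <- enum 'I_m.+1]) M i j.
rewrite E2 S /c /=; have := H1 i j; rewrite /=; lra.
Qed.
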